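(* Let $m\ge 2$. If $s=2m-1$ then $|T_s|=m^2-m$ and $\sum_{h\in T_s}h=\frac23m^4-m^3-\frac16m^2+\frac12m$; if $s=2m$ then $|T_s|=m^2$ and $\sum_{h\in T_s}h=\frac23m^4+\frac13m^3-\frac16m^2+\frac16m$. Moreover, for $s=2m-1$ the partition $\kappa_s$ with $\beta(\kappa_s)=T_s$ has length $m^2-m$ and largest part $m^2-2m+1$.
   Context: $T_s$ is the set of positive integers not expressible as $k_1s+k_2(s+1)+k_3(s+2)$ with $k_1,k_2,k_3$ nonnegative integers. The $\beta$-set of a partition is the set of hook lengths of its first-column boxes; the partition with $\beta$-set $\{h_1>\cdots>h_m\}$ is $(h_1-(m-1),h_2-(m-2),\ldots,h_m)$. *)

(* Defs.v *)
From HB Require Import structures.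
From mathcomp Require Import all_boot all_order all_algebra.
Set Implicit Arguments. Unset Strict Implicit. Unset Printing Implicit Defensive.

Definition expressible (s n : nat) : Prop :=
  exists k1 k2 k3 : nat, n = k1 * s + k2 * s.+1 + k3 * s.+2.

Definition inT (s n : nat) : Prop := 0 < n /\ ~ expressible s n.

(* the partition whose beta-set is the (finite) set listed by l:
   with {h_1 > ... > h_k} its parts are h_i - (k - i), i = 1..k *)
Definition beta_partition (l : seq nat) : seq nat :=
  let h := sort geq l in
  [seq nth 0 h i - (size h - 1 - i) | i <- iota 0 (size h)].

Definition plength (p : seq nat) : nat := count (fun x => 0 < x) p.
Definition largest_part (p : seq nat) : nat := foldr maxn 0 p.

(* Main.v *)
Require Import Defs.
From HB Require Import structures.
From mathcomp Require Import all_boot all_order all_algebra.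
From mathcomp Require Import zify ring lra.
Import GRing.Theory Num.Theory.
Set Implicit Arguments. Unset Strict Implicit.

Definition gaps (s K : nat) : seq nat :=
  flatten [seq iota (k * s.+2 + 1) (s - 1 - 2 * k) | k <- iota 0 K].

Lemma mem_gaps s K n : n \in gaps s K <->
  exists k, [/\ k < K, k * s + 2 * k < n & n < k * s + s].
Proof.
split.
- move/flatten_mapP=> [k]; rewrite mem_iota add0n => /andP[_ hk].
  rewrite mem_iota => /andP[h1 h2]; exists k.
  move: h1 h2; rewrite -addn2 mulnDr; split; lia.
- move=> [k [hk h1 h2]]; apply/flatten_mapP; exists k.
  + by rewrite mem_iota add0n.
  + rewrite mem_iota -addn2 mulnDr; apply/andP; split; lia.
Qed.

Lemma expr_iff s n : expressible s n <-> exists k, k * s <= n <= k * s + 2 * k.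
Proof.
split.
- move=> [k1 [k2 [k3 ->]]]; exists (k1 + k2 + k3).
  rewrite -[s.+2]addn2 -[s.+1]addn1 !mulnDr !mulnDl.
  set a := k1 * s; set b := k2 * s; set c := k3 * s.
  apply/andP; split; lia.
- move=> [k /andP[h1 h2]].
  set r := n - k * s.
  have hr : r %% 2 < 2 by rewrite ltn_pmod.
  have e := divn_eq r 2.
  have hab : r %/ 2 + r %% 2 <= k.
    move: e hr h2; rewrite /r; set P := k * s; set A := r %/ 2; set B := r %% 2.
    lia.
  exists (k - r %/ 2 - r %% 2), (r %% 2), (r %/ 2).
  rewrite -[s.+2]addn2 -[s.+1]addn1 !mulnDr.
  have hX : (k - r %/ 2 - r %% 2) * s + (r %/ 2 * s + r %% 2 * s) = k * s.
    by rewrite -!mulnDl; congr (_ * _); lia.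
  move: hX e h1 hr; rewrite /r.
  set X := (k - _ - _) * s; set P := k * s; set A := (n - P) %/ 2;
  set B := (n - P) %% 2; set As := A * s; set Bs := B * s.
  lia.
Qed.

Lemma inT_iff s n : 0 < s -> inT s n <-> exists k, k * s + 2 * k < n /\ n < k * s + s.
Proof.
move=> s0; split.
- move=> [n0 ne]. exists (n %/ s).
  have e := divn_eq n s. have hm : n %% s < s by rewrite ltn_pmod.
  split; last lia.
  rewrite ltnNge; apply/negP => h; apply: ne; apply/expr_iff.
  exists (n %/ s); apply/andP; split; lia.
- move=> [k [h1 h2]]; split; first lia.
  move/expr_iff=> [j /andP[j1 j2]].
  case: (leqP j k) => hj.
  + have : j * s <= k * s by rewrite leq_mul2r hj orbT. lia.
  + have : k.+1 * s <= j * s by rewrite leq_mul2r hj orbT. rewrite mulSn. lia.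
Qed.

Fixpoint bp (h : seq nat) := if h is x :: t then (x - size t) :: bp t else [::].

Lemma beta_bp h : [seq nth 0 h i - (size h - 1 - i) | i <- iota 0 (size h)] = bp h.
Proof.
elim: h => [|x t IH] //=.
rewrite subn1 /= subn0; congr (_ :: _).
rewrite -[in RHS]IH -(addn0 1) iotaDl -map_comp; apply: eq_map => i /=.
by rewrite add0n addn0 subnDA.
Qed.

Definition gtr := fun a b : nat => b < a.

Lemma size_lt x t : sorted gtr (x :: t) -> all (fun y => 0 < y) (x :: t) -> size t < x.
Proof.
elim: t x => [|y t IH] x /=; first by move=> _ /andP[].
move=> /andP[hyx hp] /andP[hx hall].
have := IH y hp hall. rewrite /gtr in hyx. lia.
Qed.

Lemma plength_bp h : sorted gtr h -> all (fun y => 0 < y) h -> plength (bp h) = size h.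
Proof.
elim: h => [|x t IH] //= hs /andP[hx hall].
rewrite /plength /= -/(plength (bp t)) IH //; last exact: path_sorted hs.
have := size_lt hs; rewrite /= hx hall => /(_ isT). rewrite subn_gt0 => -> //.
Qed.

Lemma largest_bp x t : sorted gtr (x :: t) -> all (fun y => 0 < y) (x :: t) ->
  largest_part (bp (x :: t)) = x - size t.
Proof.
elim: t x => [|y t IH] x; first by rewrite /largest_part /= maxn0.
move=> hs hall.
have hs' : sorted gtr (y :: t) by exact: path_sorted hs.
have hall' : all (fun y => 0 < y) (y :: t) by case/andP: hall.
have := IH y hs' hall'; rewrite /largest_part /= => ->.
move: hs => /= /andP[hyx _]; rewrite /gtr in hyx.
have := size_lt hs' hall'. lia.
Qed.

Lemma sorted_gtr x t : path geq x t -> uniq (x :: t) -> path gtr x t.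
Proof.
elim: t x => [|y t IH] x //= /andP[hxy hp] /andP[hx /andP[hy hu]].
rewrite IH //= ?hy ?hu // andbT /gtr.
rewrite in_cons negb_or in hx; case/andP: hx => hxy' _.
by rewrite ltn_neqAle eq_sym hxy' hxy.
Qed.

Lemma beta_props l M : uniq l -> all (fun y => 0 < y) l -> M \in l ->
  (forall y, y \in l -> y <= M) ->
  plength (beta_partition l) = size l /\
  largest_part (beta_partition l) = M - (size l).-1.
Proof.
move=> ul pl Ml Mmax.
have ps : perm_eq (sort geq l) l by rewrite perm_sort.
have ss : sorted geq (sort geq l) by apply: sort_sorted => a b; exact: leq_total.
have us : uniq (sort geq l) by rewrite sort_uniq.
have pos : all (fun y => 0 < y) (sort geq l) by rewrite all_sort.
have mem : sort geq l =i l by apply: perm_mem.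
rewrite /beta_partition /= beta_bp.
case E: (sort geq l) ss us pos mem => [|x t] ss us pos mem.
  by move: (mem M); rewrite Ml.
have sg : sorted gtr (x :: t) by exact: sorted_gtr.
have sz : size l = (size t).+1 by rewrite -(perm_size ps) E.
split; first by rewrite plength_bp // sz.
rewrite largest_bp // sz /=.
congr (_ - _).
have hx : x \in l by rewrite -(mem x) mem_head.
have : all (geq x) t by apply: order_path_min ss => a b c h1 h2; exact: leq_trans h2 h1.
move/allP => h.
apply/eqP; rewrite eqn_leq Mmax //=.
move: Ml; rewrite -(mem M) in_cons => /orP[/eqP -> //|/h //].
Qed.

Lemma sum_iota2 a b : 2 * sumn (iota a b) + b = b * (2 * a + b).
Proof. elim: b a => [|b IH] a //=. have := IH a.+1. nia. Qed.

Lemma gapsS s K : gaps s K.+1 = gaps s K ++ iota (K * s.+2 + 1) (s - 1 - 2 * K).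
Proof. by rewrite /gaps -(addn1 K) iotaD map_cat flatten_cat /= cats0. Qed.


Lemma uniq_gaps s K : uniq (gaps s K).
Proof.
elim: K => [|K IH] //; rewrite gapsS cat_uniq IH iota_uniq andbT /=.
apply/hasPn => n; rewrite mem_iota => /andP[hn _]; apply/negP => /mem_gaps [k [hk h1 h2]].
have : k.+1 * s <= K * s by rewrite leq_mul2r hk orbT.
move: hn; rewrite -addn2 mulnDr mulSn. lia.
Qed.

Lemma mem_gapsT s K n : 0 < s -> s <= 2 * K + 1 -> (n \in gaps s K <-> inT s n).
Proof.
move=> s0 sK; rewrite mem_gaps inT_iff //; split.
- by move=> [k [_ h1 h2]]; exists k.
- move=> [k [h1 h2]]; exists k; split => //; lia.
Qed.

Lemma L_M1 m : 2 <= m ->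
  (m - 2) * (2 * m - 1) + 2 * (m - 2) < 2 * m ^ 2 - 3 * m /\ 2 * m ^ 2 - 3 * m < (m - 2) * (2 * m - 1) + (2 * m - 1).
Proof.
move=> hm; have -> : m ^ 2 = m * m by rewrite mulnn.
have e : (m - 2) * (2 * m - 1) + 2 * m = 2 * (m * m) - 3 * m + 2 by nia.
lia.
Qed.

Lemma L_max m k y : 2 <= m -> k.+1 <= m - 1 -> y < k * (2 * m - 1) + (2 * m - 1) ->
  y <= 2 * m ^ 2 - 3 * m.
Proof.
move=> hm hk hy.
have : k.+1 * (2 * m - 1) <= (m - 1) * (2 * m - 1) by rewrite leq_mul2r hk orbT.
rewrite mulSn.
have -> : m ^ 2 = m * m by rewrite mulnn.
have e : (m - 1) * (2 * m - 1) = 2 * (m * m) - 3 * m + 1 by nia.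
lia.
Qed.

Lemma L_last m : 2 <= m -> 2 * m ^ 2 - 3 * m - (m ^ 2 - m).-1 = m ^ 2 - 2 * m + 1.
Proof.
move=> hm; have -> : m ^ 2 = m * m by rewrite mulnn.
have : 2 * m <= m * m by rewrite leq_mul2r hm orbT.
lia.
Qed.

Local Open Scope ring_scope.

Lemma size_gaps s K : (2 * K <= s.+1)%N ->
  (size (gaps s K))%:R = K%:R * (s%:R - K%:R) :> rat.
Proof.
elim: K => [|K IH] hK; first by rewrite /gaps /= mul0r.
rewrite gapsS size_cat size_iota natrD IH; last by lia.
have -> : (s - 1 - 2 * K)%N%:R = s%:R - 1 - 2 * K%:R :> rat.
  by rewrite !natrB ?natrM //; lia.
rewrite -addn1 natrD; ring.
Qed.

Definition Fsum (s K : rat) := K/6 + K^+2/2 - 2*K^+3/3 - s*K/3 + s*K^+2/2 - 2*s*K^+3/3 + s^+2*K^+2/2.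

Lemma sum_gaps s K : (2 * K <= s.+1)%N ->
  (sumn (gaps s K))%:R = Fsum s%:R K%:R :> rat.
Proof.
elim: K => [|K IH] hK; first by rewrite /gaps /Fsum /= !mul0r; ring.
rewrite gapsS sumn_cat natrD IH; last by lia.
have hb : (s - 1 - 2 * K)%N%:R = s%:R - 1 - 2 * K%:R :> rat.
  by rewrite !natrB ?natrM //; lia.
have H := congr1 (fun x => x%:R : rat) (sum_iota2 (K * s.+2 + 1) (s - 1 - 2 * K)).
move: H => /=; rewrite !(natrD, natrM) hb.
set S := (sumn _)%:R => H.
have -> : S = ((s%:R - 1 - 2 * K%:R) * (2%:R * ((K%:R * s.+2%:R) + 1) + (s%:R - 1 - 2 * K%:R)) - (s%:R - 1 - 2 * K%:R)) / 2.
  by rewrite -H; field.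
have e1 : s.+2%:R = s%:R + 2 :> rat by rewrite -addn2 natrD.
have e2 : K.+1%:R = K%:R + 1 :> rat by rewrite -addn1 natrD.
by rewrite /Fsum e1 e2; field.
Qed.

Theorem mainTheorem9 (m : nat) (hm : (2 <= m)%N) :
  (exists l : seq nat,
     [/\ uniq l /\ (forall n : nat, n \in l <-> inT (2 * m - 1) n),
         size l = (m ^ 2 - m)%N,
         ((sumn l)%:R : rat) =
           2/3 * m%:R ^+ 4 - m%:R ^+ 3 - 1/6 * m%:R ^+ 2 + 1/2 * m%:R,
         plength (beta_partition l) = (m ^ 2 - m)%N
       & largest_part (beta_partition l) = (m ^ 2 - 2 * m + 1)%N])
  /\
  (exists l : seq nat,
     [/\ uniq l, (forall n : nat, n \in l <-> inT (2 * m) n),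
         size l = (m ^ 2)%N
       & ((sumn l)%:R : rat) =
           2/3 * m%:R ^+ 4 + 1/3 * m%:R ^+ 3 - 1/6 * m%:R ^+ 2 + 1/6 * m%:R]).
Proof.
split.
- set s := (2 * m - 1)%N.
  have hs : (s%:R : rat) = 2 * m%:R - 1 by rewrite /s natrB ?natrM //; lia.
  have hmem : forall n, n \in gaps s m <-> inT s n.
    by move=> n; apply: mem_gapsT; rewrite /s; lia.
  have hsz : size (gaps s m) = (m ^ 2 - m)%N.
    apply/eqP; rewrite -(eqr_nat rat) size_gaps; last by rewrite /s; lia.
    have hm2 : (m <= m ^ 2)%N by rewrite -mulnn leq_pmull //; lia.
    rewrite hs natrB // natrX.
    by apply/eqP; ring.
  have pos : all (fun y => (0 < y)%N) (gaps s m).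
    by apply/allP => y /hmem [].
  set M := (2 * m ^ 2 - 3 * m)%N.
  have hM : M \in gaps s m.
    apply/mem_gaps; exists (m - 2)%N; rewrite /M /s.
    have [h1 h2] := L_M1 hm; split => //; lia.
  have hMax : forall y, y \in gaps s m -> (y <= M)%N.
    move=> y /mem_gaps [k [hk h1 h2]].
    have hk2 : (k.+1 <= m - 1)%N by rewrite /s in h2 h1; lia.
    exact: L_max hm hk2 h2.
  have [hpl hlp] := beta_props (uniq_gaps s m) pos hM hMax.
  exists (gaps s m); split => //.
  + split; [exact: uniq_gaps | exact: hmem].
  + rewrite sum_gaps; last by rewrite /s; lia.
    by rewrite hs /Fsum; field.
  + by rewrite hpl hsz.
  + by rewrite hlp hsz /M L_last.
- set s := (2 * m)%N.
  have hs : (s%:R : rat) = 2 * m%:R by rewrite /s natrM.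
  exists (gaps s m); split.
  + exact: uniq_gaps.
  + by move=> n; apply: mem_gapsT; rewrite /s; lia.
  + apply/eqP; rewrite -(eqr_nat rat) size_gaps; last by rewrite /s; lia.
    by rewrite natrX hs; apply/eqP; ring.
  + rewrite sum_gaps; last by rewrite /s; lia.
    by rewrite hs /Fsum; field.
Qed.
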